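(* $\mathsf{N4CK}$ has the Disjunction Property (for all $\phi,\psi\in\mathcal{L}_{\Box\!\!\rightarrow}$: $\phi\vee\psi\in\mathsf{N4CK}$ iff $\phi\in\mathsf{N4CK}$ or $\psi\in\mathsf{N4CK}$) and the Constructible Falsity Property (for all $\phi,\psi$: $\sim(\phi\wedge\psi)\in\mathsf{N4CK}$ iff $\sim\phi\in\mathsf{N4CK}$ or $\sim\psi\in\mathsf{N4CK}$).
   Context: Let $\mathcal{L}_{\Box\!\!\rightarrow}$ be the language built from propositional variables with binary $\wedge,\vee,\to$, unary strong negation $\sim$, and a binary would-conditional $\Box\!\!\rightarrow$. A Nelsonian conditional model is $\mathcal{M}=(W,\leq,R,V^+,V^-)$ where $W\neq\emptyset$, $\leq$ is a preorder, $V^+,V^-$ map each variable to a $\leq$-upward-closed subset of $W$, and $R\subseteq W\times(\mathcal{P}(W)\times\mathcal{P}(W))\times W$ (write $R_{(X,Y)}(w,v)$) satisfies for all $X,Y$: (c1) if $w\leq w'$ and $R_{(X,Y)}(w,v)$ then $R_{(X,Y)}(w',v')$ for some $v'\geq v$; (c2) if $R_{(X,Y)}(w,v)$ and $v\leq v'$ then $R_{(X,Y)}(w',v')$ for some $w'\geq w$. Verification $\models^+$ / falsification $\models^-$: $w\models^\pm p$ iff $w\in V^\pm(p)$; $\wedge$ verified iff both verified, falsified iff one falsified; $\vee$ verified iff one verified, falsified iff both falsified; $\sim$ swaps $\models^+$ and $\models^-$; $w\models^+\psi\to\chi$ iff for all $v\geq w$, $v\models^+\psi$ implies $v\models^+\chi$;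 $w\models^-\psi\to\chi$ iff $w\models^+\psi$ and $w\models^-\chi$; $w\models^+\psi\Box\!\!\rightarrow\chi$ iff for all $v\geq w$ and $u$ with $R_{\|\psi\|_\mathcal{M}}(v,u)$, $u\models^+\chi$; $w\models^-\psi\Box\!\!\rightarrow\chi$ iff some $u$ has $R_{\|\psi\|_\mathcal{M}}(w,u)$ and $u\models^-\chi$; $\|\psi\|_\mathcal{M}=(\{w\mid w\models^+\psi\},\{w\mid w\models^-\psi\})$. $\phi\in\mathsf{N4CK}$ means $\phi$ is verified at every point of every such model. *)

(* Defs.v *)
From Stdlib Require Import Bool.

Inductive form : Type :=
  | Var  : nat -> form
  | And  : form -> form -> form
  | Or   : form -> form -> form
  | Imp  : form -> form -> form
  | SNeg : form -> form
  | Cond : form -> form -> form.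

Record nmodel : Type := NModel {
  W : Type;
  W_nonempty : inhabited W;
  le : W -> W -> Prop;
  le_refl : forall w, le w w;
  le_trans : forall u v w, le u v -> le v w -> le u w;
  Vp : nat -> W -> Prop;
  Vm : nat -> W -> Prop;
  Vp_up : forall p w w', le w w' -> Vp p w -> Vp p w';
  Vm_up : forall p w w', le w w' -> Vm p w -> Vm p w';
  R : (W -> Prop) -> (W -> Prop) -> W -> W -> Prop;
  c1 : forall X Y w w' v, le w w' -> R X Y w v ->
         exists v', le v v' /\ R X Y w' v';
  c2 : forall X Y w v v', R X Y w v -> le v v' ->
         exists w', le w w' /\ R X Y w' v'
}.

(* sat M true w φ : w verifies φ ;  sat M false w φ : w falsifies φ *)
Fixpoint sat (M : nmodel) (b : bool) (w : W M) (f : form) {struct f} : Prop :=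
  match f with
  | Var p => if b then Vp M p w else Vm M p w
  | And a c => if b then sat M true w a /\ sat M true w c
               else sat M false w a \/ sat M false w c
  | Or a c => if b then sat M true w a \/ sat M true w c
              else sat M false w a /\ sat M false w c
  | Imp a c => if b then forall v, le M w v -> sat M true v a -> sat M true v c
               else sat M true w a /\ sat M false w c
  | SNeg a => sat M (negb b) w a
  | Cond a c =>
      if b then forall v u, le M w v ->
                  R M (fun x => sat M true x a) (fun x => sat M false x a) v u ->
                  sat M true u c
      else exists u, R M (fun x => sat M true x a) (fun x => sat M false x a) w u
                     /\ sat M false u c
  end.

Definition N4CK (f : form) : Prop := forall (M : nmodel) (w : W M), sat M true w f.

(* Main.v *)
Require Import Defs.
From Stdlib Require Import Bool Classical FunctionalExtensionality PropExtensionality.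

Lemma persist (M : nmodel) : forall f b w w', le M w w' -> sat M b w f -> sat M b w' f.
Proof.
  induction f as [p|f1 IH1 f2 IH2|f1 IH1 f2 IH2|f1 IH1 f2 IH2|f1 IH1|f1 IH1 f2 IH2];
    intros b w w' Hle H; destruct b; simpl in *.
  - eapply Vp_up; eauto.
  - eapply Vm_up; eauto.
  - destruct H; split; eauto.
  - destruct H; [left|right]; eauto.
  - destruct H; [left|right]; eauto.
  - destruct H; split; eauto.
  - intros v Hv. apply H. eapply le_trans; eauto.
  - destruct H; split; eauto.
  - eauto.
  - eauto.
  - intros v u Hv HR. apply (H v u); auto. eapply le_trans; eauto.
  - destruct H as [u [HR Hu]].
    destruct (c1 M _ _ _ _ _ Hle HR) as [u' [Hu' HR']].
    exists u'; split; eauto.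
Qed.

Section Glue.
Variables M1 M2 : nmodel.
Definition GW := option (W M1 + W M2).
Definition gle (w w' : GW) : Prop :=
  match w, w' with
  | None, _ => True
  | Some (inl a), Some (inl a') => le M1 a a'
  | Some (inr a), Some (inr a') => le M2 a a'
  | _, _ => False
  end.
Definition gVp (p : nat) (w : GW) : Prop :=
  match w with None => False | Some (inl a) => Vp M1 p a | Some (inr a) => Vp M2 p a end.
Definition gVm (p : nat) (w : GW) : Prop :=
  match w with None => False | Some (inl a) => Vm M1 p a | Some (inr a) => Vm M2 p a end.
Definition gR (X Y : GW -> Prop) (w v : GW) : Prop :=
  match w, v with
  | Some (inl a), Some (inl b) =>
      R M1 (fun x => X (Some (inl x))) (fun x => Y (Some (inl x))) a b
  | Some (inr a), Some (inr b) =>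
      R M2 (fun x => X (Some (inr x))) (fun x => Y (Some (inr x))) a b
  | _, _ => False
  end.

Lemma gle_refl : forall w, gle w w.
Proof. intros [[a|a]|]; simpl; auto; apply le_refl. Qed.
Lemma gle_trans : forall u v w, gle u v -> gle v w -> gle u w.
Proof.
  intros [[a|a]|] [[b|b]|] [[c|c]|]; simpl; intros; try tauto; eapply le_trans; eauto.
Qed.
Lemma gVp_up : forall p w w', gle w w' -> gVp p w -> gVp p w'.
Proof.
  intros p [[a|a]|] [[b|b]|]; simpl; intros; try tauto; eapply Vp_up; eauto.
Qed.
Lemma gVm_up : forall p w w', gle w w' -> gVm p w -> gVm p w'.
Proof.
  intros p [[a|a]|] [[b|b]|]; simpl; intros; try tauto; eapply Vm_up; eauto.
Qed.
Lemma gc1 : forall X Y w w' v, gle w w' -> gR X Y w v ->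
         exists v', gle v v' /\ gR X Y w' v'.
Proof.
  intros X Y [[a|a]|] [[b|b]|] [[c|c]|]; simpl; intros H1 H2; try tauto.
  - destruct (c1 M1 _ _ _ _ _ H1 H2) as [v' [? ?]]. exists (Some (inl v')); simpl; auto.
  - destruct (c1 M2 _ _ _ _ _ H1 H2) as [v' [? ?]]. exists (Some (inr v')); simpl; auto.
Qed.
Lemma gc2 : forall X Y w v v', gR X Y w v -> gle v v' ->
         exists w', gle w w' /\ gR X Y w' v'.
Proof.
  intros X Y [[a|a]|] [[b|b]|] [[c|c]|]; simpl; intros H1 H2; try tauto.
  - destruct (c2 M1 _ _ _ _ _ H1 H2) as [v' [? ?]]. exists (Some (inl v')); simpl; auto.
  - destruct (c2 M2 _ _ _ _ _ H1 H2) as [v' [? ?]]. exists (Some (inr v')); simpl; auto.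
Qed.

Definition GM : nmodel :=
  NModel GW (inhabits None) gle gle_refl gle_trans gVp gVm gVp_up gVm_up gR gc1 gc2.

Lemma emb1 : forall f b a, sat GM b (Some (inl a)) f <-> sat M1 b a f.
Proof.
  induction f as [p|f1 IH1 f2 IH2|f1 IH1 f2 IH2|f1 IH1 f2 IH2|f1 IH1|f1 IH1 f2 IH2];
    intros b a; destruct b; simpl in *; try reflexivity.
  - rewrite IH1, IH2; tauto.
  - rewrite IH1, IH2; tauto.
  - rewrite IH1, IH2; tauto.
  - rewrite IH1, IH2; tauto.
  - split.
    + intros H v Hv. rewrite <- !IH1, <- !IH2. apply (H (Some (inl v))); auto.
    + intros H [[v|v]|] Hv; simpl in Hv; try tauto. rewrite !IH1, !IH2. auto.
  - rewrite IH1, IH2; tauto.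
  - apply IH1.
  - apply IH1.
  - assert (E1 : (fun x => sat GM true (Some (inl x)) f1) = (fun x => sat M1 true x f1))
      by (extensionality x; apply propositional_extensionality; apply IH1).
    assert (E2 : (fun x => sat GM false (Some (inl x)) f1) = (fun x => sat M1 false x f1))
      by (extensionality x; apply propositional_extensionality; apply IH1).
    split.
    + intros H v u Hv HR. apply IH2. apply (H (Some (inl v)) (Some (inl u))); auto.
      simpl. rewrite E1, E2. auto.
    + intros H [[v|v]|] [[u|u]|] Hv HR; simpl in Hv, HR; try tauto.
      apply IH2. rewrite E1, E2 in HR. eauto.
  - assert (E1 : (fun x => sat GM true (Some (inl x)) f1) = (fun x => sat M1 true x f1))
      by (extensionality x; apply propositional_extensionality; apply IH1).
    assert (E2 : (fun x => sat GM false (Some (inl x)) f1) = (fun x => sat M1 false x f1))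
      by (extensionality x; apply propositional_extensionality; apply IH1).
    split.
    + intros [[[u|u]|] [HR Hu]]; simpl in HR; try tauto.
      rewrite E1, E2 in HR. exists u; split; auto. apply IH2; auto.
    + intros [u [HR Hu]]. exists (Some (inl u)). simpl. rewrite E1, E2.
      split; auto. apply IH2; auto.
Qed.

Lemma emb2 : forall f b a, sat GM b (Some (inr a)) f <-> sat M2 b a f.
Proof.
  induction f as [p|f1 IH1 f2 IH2|f1 IH1 f2 IH2|f1 IH1 f2 IH2|f1 IH1|f1 IH1 f2 IH2];
    intros b a; destruct b; simpl in *; try reflexivity.
  - rewrite IH1, IH2; tauto.
  - rewrite IH1, IH2; tauto.
  - rewrite IH1, IH2; tauto.
  - rewrite IH1, IH2; tauto.
  - split.
    + intros H v Hv. rewrite <- !IH1, <- !IH2. apply (H (Some (inr v))); auto.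
    + intros H [[v|v]|] Hv; simpl in Hv; try tauto. rewrite !IH1, !IH2. auto.
  - rewrite IH1, IH2; tauto.
  - apply IH1.
  - apply IH1.
  - assert (E1 : (fun x => sat GM true (Some (inr x)) f1) = (fun x => sat M2 true x f1))
      by (extensionality x; apply propositional_extensionality; apply IH1).
    assert (E2 : (fun x => sat GM false (Some (inr x)) f1) = (fun x => sat M2 false x f1))
      by (extensionality x; apply propositional_extensionality; apply IH1).
    split.
    + intros H v u Hv HR. apply IH2. apply (H (Some (inr v)) (Some (inr u))); auto.
      simpl. rewrite E1, E2. auto.
    + intros H [[v|v]|] [[u|u]|] Hv HR; simpl in Hv, HR; try tauto.
      apply IH2. rewrite E1, E2 in HR. eauto.
  - assert (E1 : (fun x => sat GM true (Some (inr x)) f1) = (fun x => sat M2 true x f1))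
      by (extensionality x; apply propositional_extensionality; apply IH1).
    assert (E2 : (fun x => sat GM false (Some (inr x)) f1) = (fun x => sat M2 false x f1))
      by (extensionality x; apply propositional_extensionality; apply IH1).
    split.
    + intros [[[u|u]|] [HR Hu]]; simpl in HR; try tauto.
      rewrite E1, E2 in HR. exists u; split; auto. apply IH2; auto.
    + intros [u [HR Hu]]. exists (Some (inr u)). simpl. rewrite E1, E2.
      split; auto. apply IH2; auto.
Qed.
End Glue.

Lemma key (b : bool) (phi psi : form) :
  (forall M w, sat M b w phi \/ sat M b w psi) ->
  (forall M w, sat M b w phi) \/ (forall M w, sat M b w psi).
Proof.
  intros H. apply NNPP. intros Hn.
  apply not_or_and in Hn. destruct Hn as [H1 H2].
  apply not_all_ex_not in H1. destruct H1 as [M1 H1].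
  apply not_all_ex_not in H1. destruct H1 as [w1 H1].
  apply not_all_ex_not in H2. destruct H2 as [M2 H2].
  apply not_all_ex_not in H2. destruct H2 as [w2 H2].
  destruct (H (GM M1 M2) None) as [Hr|Hr].
  - apply H1. apply (emb1 M1 M2). apply (persist (GM M1 M2) phi b None); simpl; auto.
  - apply H2. apply (emb2 M1 M2). apply (persist (GM M1 M2) psi b None); simpl; auto.
Qed.

Theorem proposition7 :
  (forall phi psi : form, N4CK (Or phi psi) <-> N4CK phi \/ N4CK psi) /\
  (forall phi psi : form,
      N4CK (SNeg (And phi psi)) <-> N4CK (SNeg phi) \/ N4CK (SNeg psi)).
Proof.
  unfold N4CK; split; intros phi psi; split; simpl.
  - intros H. apply (key true). exact H.
  - intros [H|H] M w; [left|right]; apply H.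
  - intros H. apply (key false). exact H.
  - intros [H|H] M w; [left|right]; apply H.
Qed.
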